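(* Let $\Psi$ be a root subsystem of $\Phi$, let $\Delta=(D_0,L_{\beta_1},D_1,\dots,L_{\beta_m},D_m)$ be a gallery in $\Psi$, let $i\in[0,m]$, and let $C\in\mathrm{Ch}_\Phi$ be a chamber lifting $D_i$. Then there exists a unique gallery in $\Phi$ that lifts $\Delta$ and whose $i$th chamber is $C$.
   Context: $E$ is a finite-dimensional real Euclidean space with inner product $(\cdot,\cdot)$; $\Phi\subset E$ is a finite (reduced) root system (not necessarily spanning, not necessarily crystallographic) with reflections $\omega_\alpha$ through $L_\alpha=\alpha^\perp$. A root subsystem is a nonempty $\Psi\subset\Phi$ stable under $\omega_\alpha$, $\alpha\in\Psi$. For $X\subset\Phi$, $\mathrm{Ch}_X$ is the set of connected components of $E\setminus\bigcup_{\alpha\in X}L_\alpha$. Chambers $C,D\in\mathrm{Ch}_X$ are connected through $L_\alpha$ if $\overline C\cap\overline D\cap L_\alpha$ has nonempty interior in $L_\alpha$. A gallery in $X$ (for $X=\Phi$ or a root subsystem) is a sequence $(C_0,L_{\alpha_1},C_1,\dots,L_{\alpha_n},C_n)$ with $C_j\in\mathrm{Ch}_X$, $\alpha_j\in X$, and $C_{j-1},C_j$ connected through $L_{\alpha_j}$ for all $j$; $C_j$ is its $j$th chamber and $(L_{\alpha_1},\dots,L_{\alpha_n})$ its sequence of walls. For $C\in\mathrm{Ch}_\Phi$, $\Phi^+(C)=\{\alpha\in\Phi:(e,\alpha)>0\ \forall e\in C\}$ and $\Phi^s(C)$ is the unique simple system of $\Phi$ contained in $\Phi^+(C)$; similarly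 $\Psi^s(D)$ for $D\in\mathrm{Ch}_\Psi$. A chamber $C\in\mathrm{Ch}_\Phi$ lifts $D\in\mathrm{Ch}_\Psi$ if $\Psi^s(D)\subset\Phi^s(C)$. A gallery $\Gamma$ in $\Phi$ lifts a gallery $\Delta$ in $\Psi$ if their sequences of walls coincide and, for each $j$, the $j$th chamber of $\Gamma$ lifts the $j$th chamber of $\Delta$. *)

(* Defs.v *)
From HB Require Import structures.
From mathcomp Require Import all_boot all_order all_algebra.
From mathcomp Require Import all_classical all_reals all_analysis.
Set Implicit Arguments. Unset Strict Implicit. Unset Printing Implicit Defensive.
Import Order.TTheory GRing.Theory Num.Theory.
Import numFieldNormedType.Exports.
Local Open Scope classical_set_scope.
Local Open Scope ring_scope.

(* The Euclidean space E is modelled as 'rV[R]_n with the standard inner product. *)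
Definition dotp (R : realType) (n : nat) (u v : 'rV[R]_n) : R := (u *m v^T) 0 0.

Definition refl (R : realType) (n : nat) (a v : 'rV[R]_n) : 'rV[R]_n :=
  v - ((2 * dotp v a) / dotp a a) *: a.

Definition hyp (R : realType) (n : nat) (a : 'rV[R]_n) : set 'rV[R]_n :=
  [set e | dotp e a = 0].

(* finite reduced (not necessarily crystallographic / spanning) root system *)
Definition root_system (R : realType) (n : nat) (Phi : seq 'rV[R]_n) : Prop :=
  [/\ forall a, a \in Phi -> a != 0,
      forall a (c : R), a \in Phi -> c *: a \in Phi -> c = 1 \/ c = -1
    & forall a b, a \in Phi -> b \in Phi -> refl a b \in Phi].

Definition root_subsystem (R : realType) (n : nat) (Phi Psi : seq 'rV[R]_n) : Prop :=
  [/\ Psi != [::], {subset Psi <= Phi}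
    & forall a b, a \in Psi -> b \in Psi -> refl a b \in Psi].

Definition hcompl (R : realType) (n : nat) (X : seq 'rV[R]_n) : set 'rV[R]_n :=
  [set e | forall a, a \in X -> dotp e a != 0].

Definition chamber (R : realType) (n : nat) (X : seq 'rV[R]_n) (C : set 'rV[R]_n) : Prop :=
  exists2 x, hcompl X x & C = connected_component (hcompl X) x.

(* closure C /\ closure D /\ L has nonempty interior in L (subspace topology) *)
Definition connected_through (R : realType) (n : nat) (C D L : set 'rV[R]_n) : Prop :=
  exists x, exists U : set 'rV[R]_n,
    [/\ open U, U x, L x & U `&` L `<=` closure C `&` closure D `&` L].

(* a gallery in X of length m: chambers Cs 0 .. Cs m, walls W 1 .. W m *)
Definition gallery (R : realType) (n : nat) (X : seq 'rV[R]_n) (m : nat)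
    (Cs : nat -> set 'rV[R]_n) (W : nat -> set 'rV[R]_n) : Prop :=
  (forall j, (j <= m)%N -> chamber X (Cs j)) /\
  (forall j, (1 <= j <= m)%N ->
     (exists2 a, a \in X & W j = hyp a) /\ connected_through (Cs j.-1) (Cs j) (W j)).

Definition simple_system (R : realType) (n : nat) (X S : seq 'rV[R]_n) : Prop :=
  [/\ {subset S <= X}, free S &
      forall a, a \in X -> exists c : 'I_(size S) -> R,
        a = \sum_(i < size S) c i *: S`_i /\
        ((forall i, 0 <= c i) \/ (forall i, c i <= 0))].

Definition pos_roots (R : realType) (n : nat) (X : seq 'rV[R]_n) (C : set 'rV[R]_n)
  : set 'rV[R]_n := [set a | a \in X /\ forall e, C e -> 0 < dotp e a].

Definition is_simple_of (R : realType) (n : nat) (X : seq 'rV[R]_n) (C : set 'rV[R]_n)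
  (S : seq 'rV[R]_n) : Prop :=
  simple_system X S /\ (forall a, a \in S -> pos_roots X C a).

Definition lifts (R : realType) (n : nat) (Phi Psi : seq 'rV[R]_n)
  (C D : set 'rV[R]_n) : Prop :=
  forall SPhi SPsi, is_simple_of Phi C SPhi -> is_simple_of Psi D SPsi ->
    {subset SPsi <= SPhi}.

Definition lifts_gallery (R : realType) (n : nat) (Phi Psi : seq 'rV[R]_n) (m : nat)
  (Cs Ds : nat -> set 'rV[R]_n) : Prop :=
  forall j, (j <= m)%N -> lifts Phi Psi (Cs j) (Ds j).

(* Main.v *)
Require Import Defs.
From HB Require Import structures.
From mathcomp Require Import all_boot all_order all_algebra.
From mathcomp Require Import all_classical all_reals all_analysis.
From mathcomp Require Import ring lra.
Import Order.TTheory GRing.Theory Num.Theory.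
Import numFieldNormedType.Exports.
Local Open Scope classical_set_scope.
Local Open Scope ring_scope.
Set Implicit Arguments. Unset Strict Implicit. Unset Printing Implicit Defensive.

Lemma dotpE (R : realType) n (u v : 'rV[R]_n) : dotp u v = \sum_j u 0 j * v 0 j.
Proof. by rewrite /dotp !mxE; apply: eq_bigr => j _; rewrite mxE. Qed.

Lemma dotpC (R : realType) n (u v : 'rV[R]_n) : dotp u v = dotp v u.
Proof. by rewrite !dotpE; apply: eq_bigr => j _; rewrite mulrC. Qed.

Lemma dotpDl (R : realType) n (u v w : 'rV[R]_n) : dotp (u + v) w = dotp u w + dotp v w.
Proof. by rewrite !dotpE -big_split; apply: eq_bigr => j _; rewrite mxE mulrDl. Qed.

Lemma dotpZl (R : realType) n (c : R) (u w : 'rV[R]_n) : dotp (c *: u) w = c * dotp u w.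
Proof. by rewrite !dotpE mulr_sumr; apply: eq_bigr => j _; rewrite mxE mulrA. Qed.

Lemma dotp0l (R : realType) n (w : 'rV[R]_n) : dotp 0 w = 0.
Proof. by rewrite -(scale0r 0) dotpZl mul0r. Qed.

Lemma dotpNl (R : realType) n (u w : 'rV[R]_n) : dotp (- u) w = - dotp u w.
Proof. by rewrite -scaleN1r dotpZl mulN1r. Qed.

Lemma dotpBl (R : realType) n (u v w : 'rV[R]_n) : dotp (u - v) w = dotp u w - dotp v w.
Proof. by rewrite dotpDl dotpNl. Qed.

Lemma dotpDr (R : realType) n (u v w : 'rV[R]_n) : dotp w (u + v) = dotp w u + dotp w v.
Proof. by rewrite !(dotpC w) dotpDl. Qed.

Lemma dotpZr (R : realType) n (c : R) (u w : 'rV[R]_n) : dotp w (c *: u) = c * dotp w u.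
Proof. by rewrite !(dotpC w) dotpZl. Qed.

Lemma dotp0r (R : realType) n (w : 'rV[R]_n) : dotp w 0 = 0.
Proof. by rewrite dotpC dotp0l. Qed.

Lemma dotpNr (R : realType) n (u w : 'rV[R]_n) : dotp w (- u) = - dotp w u.
Proof. by rewrite !(dotpC w) dotpNl. Qed.

Lemma dotpBr (R : realType) n (u v w : 'rV[R]_n) : dotp w (u - v) = dotp w u - dotp w v.
Proof. by rewrite dotpDr dotpNr. Qed.

Lemma dotp_suml (R : realType) n (I : Type) (r : seq I) (P : pred I) (F : I -> 'rV[R]_n) w :
  dotp (\sum_(i <- r | P i) F i) w = \sum_(i <- r | P i) dotp (F i) w.
Proof. exact: (big_morph (fun u => dotp u w) (fun u v => dotpDl u v w) (dotp0l w)). Qed.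

Lemma dotp_sumr (R : realType) n (I : Type) (r : seq I) (P : pred I) (F : I -> 'rV[R]_n) w :
  dotp w (\sum_(i <- r | P i) F i) = \sum_(i <- r | P i) dotp w (F i).
Proof. by rewrite dotpC dotp_suml; apply: eq_bigr => i _; rewrite dotpC. Qed.

Lemma dotpp_ge0 (R : realType) n (u : 'rV[R]_n) : 0 <= dotp u u.
Proof. by rewrite dotpE; apply: sumr_ge0 => j _; rewrite -expr2 sqr_ge0. Qed.

Lemma dotpp_eq0 (R : realType) n (u : 'rV[R]_n) : dotp u u = 0 -> u = 0.
Proof.
rewrite dotpE => /eqP; rewrite psumr_eq0; last by move=> j _; rewrite -expr2 sqr_ge0.
move/allP => H; apply/rowP => j; rewrite mxE.
by have := H j (mem_index_enum j); rewrite -expr2 sqrf_eq0 => /eqP.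
Qed.

Lemma dotpp_gt0 (R : realType) n (u : 'rV[R]_n) : u != 0 -> 0 < dotp u u.
Proof.
move=> u0; rewrite lt_def dotpp_ge0 andbT; apply/eqP => /dotpp_eq0 H.
by rewrite H eqxx in u0.
Qed.

Lemma dotp_refl_self (R : realType) n (a v : 'rV[R]_n) : a != 0 ->
  dotp (refl a v) a = - dotp v a.
Proof.
move=> a0; have := dotpp_gt0 a0; rewrite /refl dotpBl dotpZl => h.
field; exact: lt0r_neq0.
Qed.

Lemma refl_refl (R : realType) n (a v : 'rV[R]_n) : a != 0 -> refl a (refl a v) = v.
Proof.
move=> a0; rewrite {1}/refl dotp_refl_self // /refl.
by rewrite mulrN mulNr scaleNr opprK subrK.
Qed.

Lemma refl_dot (R : realType) n (a u v : 'rV[R]_n) : a != 0 ->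
  dotp (refl a u) (refl a v) = dotp u v.
Proof.
move=> a0; have := dotpp_gt0 a0 => h.
rewrite /refl dotpBl !dotpBr !dotpZl !dotpZr (dotpC a v).
field; exact: lt0r_neq0.
Qed.

Lemma refl_dotr (R : realType) n (a u v : 'rV[R]_n) : a != 0 ->
  dotp (refl a u) v = dotp u (refl a v).
Proof. by move=> a0; rewrite -{1}(refl_refl v a0) refl_dot. Qed.

Lemma refl_fix (R : realType) n (a v : 'rV[R]_n) : dotp v a = 0 -> refl a v = v.
Proof. by move=> h; rewrite /refl h mulr0 mul0r scale0r subr0. Qed.

Lemma refl_self (R : realType) n (a : 'rV[R]_n) : a != 0 -> refl a a = - a.
Proof.
move=> a0; have := dotpp_gt0 a0 => h.
rewrite /refl mulfK ?lt0r_neq0 // scaler_nat.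
by rewrite mulr2n opprD addNKr.
Qed.

Lemma reflD (R : realType) n (a u v : 'rV[R]_n) : refl a (u + v) = refl a u + refl a v.
Proof.
rewrite /refl dotpDl mulrDr mulrDl scalerDl.
by rewrite opprD addrACA.
Qed.

Lemma reflZ (R : realType) n (a u : 'rV[R]_n) (c : R) : refl a (c *: u) = c *: refl a u.
Proof.
rewrite /refl dotpZl scalerBr scalerA.
have -> : 2 * (c * dotp u a) / dotp a a = c * (2 * dotp u a / dotp a a) by rewrite mulrCA !mulrA.
by [].
Qed.

Lemma refl0 (R : realType) n (a : 'rV[R]_n) : refl a 0 = 0.
Proof. by rewrite /refl dotp0l mulr0 mul0r scale0r subr0. Qed.

Lemma reflN (R : realType) n (a u : 'rV[R]_n) : refl a (- u) = - refl a u.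
Proof. by rewrite -scaleN1r reflZ scaleN1r. Qed.

Lemma refl_sum (R : realType) n (I : Type) (r : seq I) (P : pred I) (F : I -> 'rV[R]_n) a :
  refl a (\sum_(i <- r | P i) F i) = \sum_(i <- r | P i) refl a (F i).
Proof. exact: (big_morph (refl a) (fun u v => reflD a u v) (refl0 a)). Qed.

Lemma refl_inj (R : realType) n (a u v : 'rV[R]_n) : a != 0 -> refl a u = refl a v -> u = v.
Proof. by move=> a0 h; rewrite -(refl_refl u a0) h refl_refl. Qed.

Lemma reflNa (R : realType) n (a v : 'rV[R]_n) : refl (- a) v = refl a v.
Proof.
rewrite /refl dotpNr dotpNl dotpNr opprK scalerN.
by rewrite mulrN mulNr scaleNr opprK.
Qed.

Lemma hypN (R : realType) n (a : 'rV[R]_n) : hyp (- a) = hyp a.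
Proof.
apply/seteqP; split => z; rewrite /hyp /= dotpNr.
  by move=> h; rewrite -[dotp z a]opprK h oppr0.
by move=> ->; rewrite oppr0.
Qed.

Lemma rs_nz (R : realType) n (X : seq 'rV[R]_n) a : root_system X -> a \in X -> a != 0.
Proof. by case=> h _ _; exact: h. Qed.

Lemma rs_refl (R : realType) n (X : seq 'rV[R]_n) a b : root_system X ->
  a \in X -> b \in X -> refl a b \in X.
Proof. by case=> _ _ h; exact: h. Qed.

Lemma rs_neg (R : realType) n (X : seq 'rV[R]_n) a : root_system X -> a \in X -> - a \in X.
Proof. by move=> rs aX; rewrite -refl_self ?(rs_nz rs aX) //; exact: rs_refl. Qed.

Lemma rs_reduced (R : realType) n (X : seq 'rV[R]_n) a (c : R) : root_system X ->
  a \in X -> c *: a \in X -> c = 1 \/ c = -1.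
Proof. by case=> _ h _; exact: h. Qed.

Lemma rs_perp (R : realType) n (X : seq 'rV[R]_n) a b : root_system X ->
  a \in X -> b \in X -> b != a -> b != - a ->
  b - (dotp b a / dotp a a) *: a != 0.
Proof.
move=> rs aX bX ba bNa; apply/negP; rewrite subr_eq0 => /eqP e.
have cX : (dotp b a / dotp a a) *: a \in X by rewrite -e.
case: (rs_reduced rs aX cX) => hc.
  by move: ba; rewrite e hc scale1r eqxx.
by move: bNa; rewrite e hc scaleN1r eqxx.
Qed.

Lemma subsystem_rs (R : realType) n (Phi Psi : seq 'rV[R]_n) :
  root_system Phi -> root_subsystem Phi Psi -> root_system Psi.
Proof.
move=> [h1 h2 h3] [_ sub h4]; split.
- by move=> a aP; apply: h1; apply: sub.
- by move=> a c aP caP; exact: (h2 a c (sub _ aP) (sub _ caP)).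
- exact: h4.
Qed.

Lemma refl_mem (R : realType) n (X : seq 'rV[R]_n) b a : root_system X -> b \in X ->
  (refl b a \in X) = (a \in X).
Proof.
move=> rs bX; apply/idP/idP => h; last exact: rs_refl.
by rewrite -(refl_refl a (rs_nz rs bX)); exact: rs_refl.
Qed.

Lemma dotp_cont (R : realType) n (a : 'rV[R]_n) : continuous (fun z : 'rV[R]_n => dotp z a).
Proof.
have -> : (fun z : 'rV[R]_n => dotp z a) = (fun z => \sum_(j <- index_enum 'I_n) z 0 j * a 0 j).
  by apply/funext => z; rewrite dotpE.
elim: (index_enum _) => [|j r IH].
  have -> : (fun z : 'rV[R]_n => \sum_(j <- [::]) z 0 j * a 0 j) = fun=> 0.
    by apply/funext => z; rewrite big_nil.
  exact: cst_continuous.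
have -> : (fun z : 'rV[R]_n => \sum_(j0 <- j :: r) z 0 j0 * a 0 j0) =
   (fun z => z 0 j * a 0 j + \sum_(j0 <- r) z 0 j0 * a 0 j0).
  by apply/funext => z; rewrite big_cons.
have h1 : continuous (fun z : 'rV[R]_n => z 0 j * a 0 j).
  by move=> w; apply: cvgMr_tmp; [exact: nbhs_filter|exact: coord_continuous].
move=> z; exact: (continuousD (h1 z) (IH z)).
Qed.

Lemma open_dotp_gt (R : realType) n (a : 'rV[R]_n) : open [set z | 0 < dotp z a].
Proof.
have -> : [set z | 0 < dotp z a] = (fun z => dotp z a) @^-1` [set x | 0 < x] by [].
by apply: open_comp; [move=> z _; exact: dotp_cont | exact: open_gt].
Qed.

Lemma open_dotp_lt (R : realType) n (a : 'rV[R]_n) : open [set z | dotp z a < 0].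
Proof.
have -> : [set z | dotp z a < 0] = (fun z => dotp z a) @^-1` [set x | x < 0] by [].
by apply: open_comp; [move=> z _; exact: dotp_cont | exact: open_lt].
Qed.

Lemma closed_dotp_ge (R : realType) n (a : 'rV[R]_n) : closed [set z | 0 <= dotp z a].
Proof.
have -> : [set z | 0 <= dotp z a] = (fun z => dotp z a) @^-1` [set x | 0 <= x] by [].
by apply: preimage_closed; [move=> z _; exact: dotp_cont | exact: closed_ge].
Qed.

Lemma closed_dotp_le (R : realType) n (a : 'rV[R]_n) : closed [set z | dotp z a <= 0].
Proof.
have -> : [set z | dotp z a <= 0] = (fun z => dotp z a) @^-1` [set x | x <= 0] by [].
by apply: preimage_closed; [move=> z _; exact: dotp_cont | exact: closed_le].
Qed.

Lemma closure_ge (R : realType) n (a : 'rV[R]_n) (C : set 'rV[R]_n) y :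
  (forall z, C z -> 0 < dotp z a) -> closure C y -> 0 <= dotp y a.
Proof.
move=> H cy.
have : closure [set z | 0 <= dotp z a] y.
  apply: (closureS _ cy) => z /H; exact: ltW.
by rewrite -(closure_id _).1 //; exact: closed_dotp_ge.
Qed.

Lemma closure_le (R : realType) n (a : 'rV[R]_n) (C : set 'rV[R]_n) y :
  (forall z, C z -> dotp z a < 0) -> closure C y -> dotp y a <= 0.
Proof.
move=> H cy.
have : closure [set z | dotp z a <= 0] y.
  apply: (closureS _ cy) => z /H; exact: ltW.
by rewrite -(closure_id _).1 //; exact: closed_dotp_le.
Qed.

Definition cell (R : realType) n (X : seq 'rV[R]_n) (x : 'rV[R]_n) : set 'rV[R]_n :=
  [set z | hcompl X z /\ forall a, a \in X -> (0 < dotp z a) = (0 < dotp x a)].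

Lemma separated_pos_neg (R : realType) n (a : 'rV[R]_n) :
  separated [set z | 0 < dotp z a] [set z | dotp z a < 0].
Proof.
split; apply/seteqP; split => // z [].
- move=> /(closure_ge (a := a) (C := [set z | 0 < dotp z a])) h.
  by move=> /= zn; have := h (fun _ => id); rewrite leNgt zn.
- move=> /= zp /(closure_le (a := a) (C := [set z | dotp z a < 0])) h.
  by have := h (fun _ => id); rewrite leNgt zp.
Qed.

Lemma comp_sub_cell (R : realType) n (X : seq 'rV[R]_n) x :
  hcompl X x -> connected_component (hcompl X) x `<=` cell X x.
Proof.
move=> hx z hz; split; first exact: (connected_component_sub hz).
move=> a aX.
have K : connected_component (hcompl X) x `<=` [set z | 0 < dotp z a] `|` [set z | dotp z a < 0].
  move=> w /connected_component_sub /(_ a aX) hw.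
  by case: (ltgtP (dotp w a) 0) hw => // h _; [right|left].
have xK := connected_component_refl hx.
case: (connected_subset (separated_pos_neg a) K (@component_connected _ (hcompl X) x)) => S.
  by rewrite (S _ hz) (S _ xK).
have /= h1 := S _ hz; have /= h2 := S _ xK.
by rewrite !ltNge !ltW.
Qed.

Lemma cell_sub_comp (R : realType) n (X : seq 'rV[R]_n) x :
  hcompl X x -> cell X x `<=` connected_component (hcompl X) x.
Proof.
move=> hx z [hz sz].
pose g := fun t : R => x + t *: (z - x).
have gc : continuous g.
  move=> t; apply: (@continuousD _ _ R (fun=> x) (fun t => t *: (z - x))).
    exact: cst_continuous.
  by apply: continuousZr_tmp; exact: cvg_id.
have S1 : g @` `[0, 1] `<=` hcompl X.
  move=> _ [t /= t01 <-] a aX.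
  have e : dotp (g t) a = (1 - t) * dotp x a + t * dotp z a.
    by rewrite /g dotpDl dotpZl dotpBl; ring.
  move: t01; rewrite in_itv /= => /andP[t0 t1].
  rewrite e; have := sz a aX; have := hx a aX.
  case: (ltgtP (dotp x a) 0) => // hxa _.
  - move=> hza; have hza' : dotp z a < 0.
      have nz := hz a aX; have h : ~~ (0 < dotp z a).
        by rewrite hza.
      by rewrite lt_neqAle nz leNgt h.
    rewrite lt_eqF //; nra.
  - move=> hza; rewrite gt_eqF //; nra.
have S2 : connected (g @` `[0, 1]).
  apply: connected_continuous_connected; first exact: segment_connected.
  exact: continuous_subspaceT.
have gx : (g @` `[0, 1]) x.
  by exists 0; [rewrite /= in_itv /= lexx ler01 | rewrite /g scale0r addr0].
have gz : (g @` `[0, 1]) z.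
  by exists 1; [rewrite /= in_itv /= lexx ler01 | rewrite /g scale1r addrC subrK].
exact: (connected_component_max gx S1 S2 gz).
Qed.

Lemma comp_cell (R : realType) n (X : seq 'rV[R]_n) x :
  hcompl X x -> connected_component (hcompl X) x = cell X x.
Proof.
move=> hx; apply/seteqP; split; [exact: comp_sub_cell | exact: cell_sub_comp].
Qed.

Lemma cell_self (R : realType) n (X : seq 'rV[R]_n) x : hcompl X x -> cell X x x.
Proof. by move=> hx; split. Qed.

Lemma chamber_cell (R : realType) n (X : seq 'rV[R]_n) C :
  chamber X C -> exists2 x, hcompl X x & C = cell X x.
Proof. by case=> x hx ->; exists x => //; rewrite comp_cell. Qed.

Lemma cell_chamber (R : realType) n (X : seq 'rV[R]_n) x :
  hcompl X x -> chamber X (cell X x).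
Proof. by move=> hx; exists x => //; rewrite comp_cell. Qed.

Lemma cell_eq (R : realType) n (X : seq 'rV[R]_n) x x' :
  (forall a, a \in X -> (0 < dotp x a) = (0 < dotp x' a)) -> cell X x = cell X x'.
Proof.
move=> h; apply/seteqP; split => z [hz sz]; split => // a aX.
  by rewrite sz // h.
by rewrite sz // h.
Qed.

Lemma cell_pos (R : realType) n (X : seq 'rV[R]_n) x a :
  hcompl X x -> a \in X -> 0 < dotp x a -> forall z, cell X x z -> 0 < dotp z a.
Proof. by move=> hx aX xa z [hz sz]; rewrite sz. Qed.

Lemma cell_neg (R : realType) n (X : seq 'rV[R]_n) x a :
  hcompl X x -> a \in X -> dotp x a < 0 -> forall z, cell X x z -> dotp z a < 0.
Proof.
move=> hx aX xa z [hz sz]; have := sz a aX; rewrite (ltNge 0 (dotp x a)) (ltW xa) /=.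
by move=> /negbT; rewrite -leNgt le_eqVlt (negbTE (hz a aX)).
Qed.

Definition reflC (R : realType) n (b : 'rV[R]_n) (C : set 'rV[R]_n) : set 'rV[R]_n :=
  [set z | C (refl b z)].

Lemma reflC_invol (R : realType) n (b : 'rV[R]_n) C : b != 0 -> reflC b (reflC b C) = C.
Proof. by move=> b0; apply/seteqP; split => z; rewrite /reflC /= refl_refl. Qed.

Lemma hcompl_refl (R : realType) n (X : seq 'rV[R]_n) b x : root_system X -> b \in X ->
  hcompl X x -> hcompl X (refl b x).
Proof.
move=> rs bX hx a aX; rewrite refl_dotr ?(rs_nz rs bX) //; apply: hx; exact: rs_refl.
Qed.

Lemma reflC_cell (R : realType) n (X : seq 'rV[R]_n) b x : root_system X -> b \in X ->
  hcompl X x -> reflC b (cell X x) = cell X (refl b x).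
Proof.
move=> rs bX hx; have b0 := rs_nz rs bX.
apply/seteqP; split => z; rewrite /reflC /=.
- move=> [hz sz]; split.
    by rewrite -(refl_refl z b0); exact: hcompl_refl.
  move=> a aX; have := sz _ (rs_refl rs bX aX).
  by rewrite refl_dot // refl_dotr.
- move=> [hz sz]; split; first exact: hcompl_refl.
  move=> a aX; rewrite refl_dotr // sz; last by rewrite refl_mem.
  by rewrite refl_dotr // refl_refl.
Qed.

Lemma chamber_reflC (R : realType) n (X : seq 'rV[R]_n) b C : root_system X -> b \in X ->
  chamber X C -> chamber X (reflC b C).
Proof.
move=> rs bX /chamber_cell [x hx ->]; rewrite reflC_cell //.
by apply: cell_chamber; exact: hcompl_refl.
Qed.

Lemma freeP_seq (R : realType) n (S : seq 'rV[R]_n) :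
  free S <-> (forall k : 'I_(size S) -> R, \sum_(i < size S) k i *: S`_i = 0 -> forall i, k i = 0).
Proof. by split => [/(@freeP _ _ _ (in_tuple S))|h]; last apply/(@freeP _ _ _ (in_tuple S)). Qed.

Lemma nth_map_refl (R : realType) n (b : 'rV[R]_n) (S : seq 'rV[R]_n) i :
  (map (refl b) S)`_i = refl b S`_i.
Proof.
have [lt|ge] := ltnP i (size S); first by rewrite (nth_map 0).
by rewrite !nth_default ?size_map // refl0.
Qed.

Lemma simple_map (R : realType) n (X : seq 'rV[R]_n) b C S : root_system X -> b \in X ->
  is_simple_of X (reflC b C) S -> is_simple_of X C (map (refl b) S).
Proof.
move=> rs bX [[sub fr sp] pos]; have b0 := rs_nz rs bX.
split; first split.
- move=> a /mapP [c cS ->]; apply: rs_refl => //; exact: sub.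
- apply/freeP_seq; rewrite size_map => k.
  under eq_bigr do rewrite nth_map_refl -reflZ.
  rewrite -refl_sum => hs.
  have hs' : \sum_(i < size S) k i *: S`_i = 0 by apply: (refl_inj b0); rewrite hs refl0.
  by move/freeP_seq: fr => fr; exact: fr hs'.
- move=> a aX; have [c [e sg]] := sp _ (rs_refl rs bX aX).
  rewrite size_map; exists c; split => //.
  rewrite -(refl_refl a b0) e refl_sum; apply: eq_bigr => i _.
  by rewrite reflZ nth_map_refl.
- move=> a /mapP [c cS ->]; have [cX pc] := pos _ cS; split; first exact: rs_refl.
  move=> e Ce; rewrite -refl_dotr //; apply: pc.
  by rewrite /reflC /= refl_refl.
Qed.

Lemma lifts_refl (R : realType) n (Phi Psi : seq 'rV[R]_n) b C D :
  root_system Phi -> root_subsystem Phi Psi -> b \in Psi ->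
  lifts Phi Psi C D -> lifts Phi Psi (reflC b C) (reflC b D).
Proof.
move=> rs rss bPsi L SPhi SPsi hPhi hPsi a aS.
have rsP := subsystem_rs rs rss; have [_ sub _] := rss.
have bPhi := sub _ bPsi; have b0 := rs_nz rs bPhi.
have := L _ _ (simple_map rs bPhi hPhi) (simple_map rsP bPsi hPsi) (refl b a).
rewrite map_f // => /(_ isT) /mapP [c cS e].
by rewrite (refl_inj b0 e).
Qed.

Definition cone (R : realType) n (S : seq 'rV[R]_n) (v : 'rV[R]_n) : Prop :=
  exists c : 'rV[R]_n -> R, (forall s, 0 <= c s) /\ v = \sum_(s <- S) c s *: s.

Lemma cone_scale (R : realType) n (S : seq 'rV[R]_n) v (t : R) :
  0 <= t -> cone S v -> cone S (t *: v).
Proof.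
move=> t0 [c [c0 ->]]; exists (fun s => t * c s); split.
  by move=> s; apply: mulr_ge0.
by rewrite scaler_sumr; apply: eq_bigr => s _; rewrite scalerA.
Qed.

Lemma sum_onehot (R : realType) n (T : seq 'rV[R]_n) u (k : R) : uniq T -> u \in T ->
  \sum_(s <- T) (if s == u then k else 0) *: s = k *: u.
Proof.
move=> uT uin; rewrite (big_rem u uin) /= eqxx big1_seq ?addr0 // => s /andP[_ sT].
have : s != u by move: sT; rewrite (mem_rem_uniq _ uT) => /andP[].
by move=> /negbTE ->; rewrite scale0r.
Qed.

Lemma cone_subst (R : realType) n (S : seq 'rV[R]_n) b v : b \in S ->
  cone (rem b S) b -> cone S v -> cone (rem b S) v.
Proof.
move=> bS [d [d0 eb]] [c [c0 ev]].
set T := rem b S in eb *.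
exists (fun s => c s + c b * d s); split.
  by move=> s; apply: addr_ge0 => //; apply: mulr_ge0.
have e1 : c b *: b = \sum_(s <- T) (c b * d s) *: s.
  by rewrite [X in c b *: X]eb scaler_sumr; apply: eq_bigr => s _; rewrite scalerA.
rewrite ev (big_rem b bS) /= -/T e1 addrC -big_split.
by apply: eq_bigr => s _; rewrite scalerDl.
Qed.

Lemma minimal_exists (R : realType) n (P : seq 'rV[R]_n) :
  forall k (S : seq 'rV[R]_n), (size S <= k)%N -> subseq S P ->
  (forall a, a \in P -> cone S a) ->
  exists S', [/\ subseq S' P, (forall a, a \in P -> cone S' a) &
                 forall b, b \in S' -> ~ cone (rem b S') b].
Proof.
elim=> [|k IH] S hk sub gen.
  exists S; split => // b; move: hk; rewrite leqn0 => /eqP/size0nil -> //.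
case: (pselect (exists2 b, b \in S & cone (rem b S) b)) => [[b bS cb]|nb].
  apply: (IH (rem b S)).
  - by rewrite size_rem // -ltnS (leq_trans _ hk) // prednK // (has_predT, lt0n) size_eq0;
      apply/eqP => e; rewrite e in bS.
  - exact: subseq_trans (rem_subseq _ _) sub.
  - by move=> a aP; apply: cone_subst => //; exact: gen.
exists S; split => // b bS cb; apply: nb; by exists b.
Qed.

Definition minS (R : realType) n (X : seq 'rV[R]_n) (x : 'rV[R]_n) (S : seq 'rV[R]_n) :=
  [/\ uniq S, (forall s, s \in S -> s \in X /\ 0 < dotp x s),
      (forall a, a \in X -> 0 < dotp x a -> cone S a) &
      (forall b, b \in S -> ~ cone (rem b S) b)].

Lemma dotp_cone (R : realType) n (S : seq 'rV[R]_n) (c : 'rV[R]_n -> R) x :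
  dotp x (\sum_(s <- S) c s *: s) = \sum_(s <- S) c s * dotp x s.
Proof. by rewrite dotp_sumr; apply: eq_bigr => s _; rewrite dotpZr. Qed.

Lemma no_cone (R : realType) n (X : seq 'rV[R]_n) x S u w (k : R) :
  minS X x S -> u \in S -> w \in S -> u != w -> 0 < k -> ~ cone S (w - k *: u).
Proof.
move=> [uS posS _ minim] uin win uw k0 [d [d0 e]].
set T := rem w S.
have uT : u \in T by rewrite /T (mem_rem_uniq _ uS) inE uw uin.
have Tu : uniq T by rewrite /T rem_uniq.
have e2 : w - k *: u = d w *: w + \sum_(s <- T) d s *: s by rewrite e (big_rem w win).
have [dw1|dw1] := ltP (d w) 1.
- apply: (minim w win); exists (fun s => (d s + (if s == u then k else 0)) / (1 - d w)).
  split.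
    move=> s; apply: divr_ge0; last by rewrite subr_ge0 ltW.
    by apply: addr_ge0 => //; case: ifP => // _; exact: ltW.
  have e3 : (1 - d w) *: w = \sum_(s <- T) (d s + (if s == u then k else 0)) *: s.
    under eq_bigr do rewrite scalerDl.
    rewrite big_split /= sum_onehot //.
    have -> : \sum_(s <- T) d s *: s = w - k *: u - d w *: w by rewrite e2 addrAC subrr add0r.
    by rewrite scalerBl scale1r addrAC subrK.
  have ne : 1 - d w != 0 by rewrite subr_eq0 eq_sym lt_eqF.
  rewrite -[LHS]scale1r -[in LHS](mulVf ne) -scalerA e3 scaler_sumr.
  by apply: eq_bigr => s _; rewrite scalerA mulrC.
- have := congr1 (dotp x) e2; rewrite dotpBr dotpZr dotpDr dotpZr dotp_cone => E.
  have := posS _ win => -[_ pw]; have := posS _ uin => -[_ pu].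
  have hs : 0 <= \sum_(s <- T) d s * dotp x s.
    rewrite big_seq; apply: sumr_ge0 => s sT; apply: mulr_ge0 => //.
    by have [] := posS s (mem_rem sT) => _ /ltW.
  nra.
Qed.

Lemma obtuse (R : realType) n (X : seq 'rV[R]_n) x S u w :
  root_system X -> hcompl X x -> minS X x S ->
  u \in S -> w \in S -> u != w -> dotp u w <= 0.
Proof.
move=> rs hx mS uin win uw; have [_ posS gen _] := mS.
have [uX pu] := posS _ uin; have [wX pw] := posS _ win.
rewrite leNgt; apply/negP => h.
have u0 := rs_nz rs uX.
pose c := 2 * dotp w u / dotp u u.
have c0 : 0 < c by rewrite /c divr_gt0 ?dotpp_gt0 // mulr_gt0 // dotpC.
have ew : refl u w = w - c *: u by [].
have gX : refl u w \in X by exact: rs_refl.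
have := hx _ gX; rewrite ew => hg0.
have gX' : w - c *: u \in X by rewrite -ew.
have [hg|hg] : dotp x (w - c *: u) < 0 \/ 0 < dotp x (w - c *: u).
  by move: hg0; case: ltgtP => // h1 _; [left|right].
- have nX : - (w - c *: u) \in X by exact: rs_neg.
  have hg' : 0 < dotp x (- (w - c *: u)) by rewrite dotpNr oppr_gt0.
  have cg := gen _ nX hg'.
  have ci : 0 <= c^-1 by rewrite invr_ge0 ltW.
  have cg2 := cone_scale ci cg.
  have e : c^-1 *: - (w - c *: u) = u - c^-1 *: w.
    rewrite opprB scalerBr scalerA mulVf ?gt_eqF // scale1r //.
  rewrite e in cg2.
  have ci' : 0 < c^-1 by rewrite invr_gt0.
  have wu : w != u by rewrite eq_sym.
  exact: (no_cone mS win uin wu ci' cg2).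
- exact: (no_cone mS uin win uw c0 (gen _ gX' hg)).
Qed.

Lemma sum_pos_part (R : realType) n (S : seq 'rV[R]_n) x (f : 'I_(size S) -> R) :
  (forall s, s \in S -> 0 < dotp x s) ->
  \sum_(i < size S | 0 < f i) f i *: S`_i = 0 -> forall i, f i <= 0.
Proof.
move=> pos e i; rewrite leNgt; apply/negP => fi.
have := congr1 (dotp x) e; rewrite dotp0r dotp_sumr (bigD1 i fi) /= => E.
have h1 : 0 < dotp x (f i *: S`_i) by rewrite dotpZr mulr_gt0 // pos // mem_nth.
have h2 : 0 <= \sum_(j < size S | (0 < f j) && (j != i)) dotp x (f j *: S`_j).
  apply: sumr_ge0 => j /andP[fj _]; rewrite dotpZr mulr_ge0 // ?ltW //.
  by rewrite pos // mem_nth.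
have : 0 < dotp x (f i *: S`_i) + \sum_(j < size S | (0 < f j) && (j != i)) dotp x (f j *: S`_j).
  exact: ltr_pwDl.
by rewrite E ltxx.
Qed.

Lemma minS_free (R : realType) n (X : seq 'rV[R]_n) x S :
  root_system X -> hcompl X x -> minS X x S -> free S.
Proof.
move=> rs hx mS; have [uS posS _ _] := mS.
have pos : forall s, s \in S -> 0 < dotp x s by move=> s /posS [].
apply/freeP_seq => k e.
set p := \sum_(i < size S | 0 < k i) k i *: S`_i.
set q := \sum_(i < size S | 0 < - k i) (- k i) *: S`_i.
have pq' : p - q = \sum_(i < size S) k i *: S`_i.
  rewrite /p /q (big_mkcond (fun i => 0 < k i)) (big_mkcond (fun i => 0 < - k i)) /=.
  rewrite -sumrB; apply: eq_bigr => i _.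
  case: (ltgtP (k i) 0) => h.
  - have h1 : (0 < k i) = false by rewrite ltNge ltW.
    have h2 : (0 < - k i) = true by rewrite oppr_gt0.
    by rewrite ?h1 ?h2 sub0r scaleNr opprK.
  - have h2 : (0 < - k i) = false by rewrite oppr_gt0 ltNge ltW.
    by rewrite ?h2 subr0.
  - by rewrite ?h ?oppr0 ?ltxx scale0r subr0.
have pq : p = q by apply/eqP; rewrite -subr_eq0 pq' e.
have pp : dotp p p <= 0.
  rewrite {2}pq /p /q dotp_suml; apply: sumr_le0 => i ki.
  rewrite dotp_sumr; apply: sumr_le0 => j kj.
  rewrite dotpZl dotpZr mulrA mulr_ge0_le0 //; first by rewrite mulr_ge0 // ltW.
  have ij : i != j.
    apply/eqP => e'; move: kj; rewrite -e' oppr_gt0 ltNge (ltW ki) //.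
  apply: (obtuse rs hx mS); rewrite ?mem_nth //.
  by rewrite nth_uniq.
have p0 : p = 0 by apply: dotpp_eq0; apply/eqP; rewrite eq_le pp dotpp_ge0.
have h1 := sum_pos_part pos p0.
have q0 : q = 0 by rewrite -pq.
have h2 := sum_pos_part pos q0.
move=> i; apply/eqP; rewrite eq_le h1 /=.
by rewrite -oppr_le0 h2.
Qed.

Lemma sum_seq_ord (R : realType) n (S : seq 'rV[R]_n) (F : 'rV[R]_n -> 'rV[R]_n) :
  \sum_(s <- S) F s = \sum_(i < size S) F S`_i.
Proof. by rewrite (big_nth 0) big_mkord. Qed.

Lemma simple_exists (R : realType) n (X : seq 'rV[R]_n) x :
  root_system X -> hcompl X x ->
  exists S, is_simple_of X (cell X x) S /\ minS X x S.
Proof.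
move=> rs hx.
pose P := [seq a <- undup X | 0 < dotp x a].
have uP : uniq P by rewrite filter_uniq // undup_uniq.
have memP : forall a, (a \in P) = (0 < dotp x a) && (a \in X).
  by move=> a; rewrite mem_filter mem_undup.
have genP : forall a, a \in P -> cone P a.
  move=> a aP; exists (fun s => if s == a then 1 else 0); split.
    by move=> s; case: ifP.
  by rewrite sum_onehot // scale1r.
have [S [sub gen minim]] := minimal_exists (leqnn (size P)) (subseq_refl P) genP.
have mS : minS X x S.
  split.
  - exact: subseq_uniq sub uP.
  - by move=> s /(mem_subseq sub); rewrite memP => /andP[].
  - by move=> a aX xa; apply: gen; rewrite memP xa.
  - exact: minim.
have [uS posS gS _] := mS.
exists S; split => //; split; first split.
- by move=> s /posS [].
- exact: minS_free rs hx mS.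
- move=> a aX; have := hx a aX; case: (ltgtP (dotp x a) 0) => // xa _.
  + have nX := rs_neg rs aX.
    have xna : 0 < dotp x (- a) by rewrite dotpNr oppr_gt0.
    have [c [c0 e]] := gS _ nX xna.
    exists (fun i => - c S`_i); split; last by right => i; rewrite oppr_le0.
    rewrite -[a]opprK e sum_seq_ord -sumrN; apply: eq_bigr => i _.
    by rewrite scaleNr.
  + have [c [c0 e]] := gS _ aX xa.
    exists (fun i => c S`_i); split; last by left.
    by rewrite e sum_seq_ord.
- move=> a aS; have [aX xa] := posS _ aS; split => //.
  exact: cell_pos.
Qed.

Lemma open_dotp_neq (R : realType) n (a : 'rV[R]_n) : open [set z | dotp z a != 0].
Proof.
have -> : [set z | dotp z a != 0] = [set z | 0 < dotp z a] `|` [set z | dotp z a < 0].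
  apply/seteqP; split => z /=.
    by case: (ltgtP (dotp z a) 0) => // h _; [right|left].
  by case => h; [rewrite gt_eqF | rewrite lt_eqF].
by apply: openU; [exact: open_dotp_gt | exact: open_dotp_lt].
Qed.

Lemma generic1 (R : realType) n (b a y0 : 'rV[R]_n) (U : set 'rV[R]_n) : b != 0 ->
  a - (dotp a b / dotp b b) *: b != 0 -> open U -> U y0 -> dotp y0 b = 0 ->
  exists y, [/\ U y, dotp y b = 0 & dotp y a != 0].
Proof.
move=> b0 a'0 oU Uy y0b.
have [ya|ya] := eqVneq (dotp y0 a) 0; last by exists y0.
set a' := a - (dotp a b / dotp b b) *: b in a'0.
have bb := dotpp_gt0 b0.
have a'b : dotp a' b = 0.
  by rewrite /a' dotpBl dotpZl; field; exact: lt0r_neq0.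
have a'a : dotp a' a = dotp a' a'.
  by rewrite {2}/a' dotpBr dotpZr a'b mulr0 subr0.
pose f := fun t : R => y0 + t *: a'.
have fc : continuous f.
  move=> t; apply: (@continuousD _ _ R (fun=> y0) (fun t => t *: a')).
    exact: cst_continuous.
  by apply: continuousZr_tmp; exact: cvg_id.
have : nbhs (0 : R) (f @^-1` U).
  apply: (fc 0); rewrite /f /= scale0r addr0.
  exact: open_nbhs_nbhs.
move=> /nbhs_ballP [e e0 he].
have inb : ball (0 : R) e (e / 2).
  rewrite -ball_normE /ball_ /= sub0r normrN gtr0_norm ?divr_gt0 //.
  by rewrite ltr_pdivrMr // ltr_pMr // ltr1n.
exists (f (e / 2)); split.
- exact: he.
- by rewrite /f dotpDl y0b dotpZl a'b mulr0 addr0.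
- rewrite /f dotpDl ya dotpZl a'a add0r mulf_neq0 //.
    by rewrite gt_eqF // divr_gt0.
  by rewrite gt_eqF // dotpp_gt0.
Qed.

Lemma generic_list (R : realType) n (b : 'rV[R]_n) (A : seq 'rV[R]_n) : b != 0 ->
  (forall a, a \in A -> a - (dotp a b / dotp b b) *: b != 0) ->
  forall y0 (U : set 'rV[R]_n), open U -> U y0 -> dotp y0 b = 0 ->
  exists y, [/\ U y, dotp y b = 0 & forall a, a \in A -> dotp y a != 0].
Proof.
move=> b0; elim: A => [|a A IH] hA y0 U oU Uy y0b; first by exists y0.
have [y1 [Uy1 y1b y1a]] := generic1 b0 (hA a (mem_head _ _)) oU Uy y0b.
have oU1 : open (U `&` [set z | dotp z a != 0]) by apply: openI => //; exact: open_dotp_neq.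
have Uy1' : (U `&` [set z | dotp z a != 0]) y1 by split.
have hA' : forall c, c \in A -> c - (dotp c b / dotp b b) *: b != 0.
  by move=> c cA; apply: hA; rewrite inE cA orbT.
have [y [[Uy' ya] yb yA]] := IH hA' y1 _ oU1 Uy1' y1b.
exists y; split => // c; rewrite inE => /orP [/eqP -> //|]; exact: yA.
Qed.

Lemma ct_generic (R : realType) n (X : seq 'rV[R]_n) b C C' : root_system X -> b \in X ->
  connected_through C C' (hyp b) ->
  exists y, [/\ closure C y, closure C' y, dotp y b = 0 &
             forall a, a \in X -> a != b -> a != - b -> dotp y a != 0].
Proof.
move=> rs bX [x0 [U [oU Ux0 hx0 sub]]].
have b0 := rs_nz rs bX.
pose A := [seq a <- X | (a != b) && (a != - b)].
have hA : forall a, a \in A -> a - (dotp a b / dotp b b) *: b != 0.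
  move=> a; rewrite mem_filter => /andP[/andP[ab aNb] aX]; exact: (rs_perp rs bX aX ab aNb).
have [y [Uy yb yA]] := generic_list b0 hA oU Ux0 hx0.
have [[c1 c2] _] := sub y (conj Uy yb).
exists y; split => // a aX ab aNb; apply: yA; by rewrite mem_filter ab aNb.
Qed.

Lemma closure_cell_sign (R : realType) n (X : seq 'rV[R]_n) x y a : hcompl X x -> a \in X ->
  closure (cell X x) y -> dotp y a != 0 -> (0 < dotp y a) = (0 < dotp x a).
Proof.
move=> hx aX cy ya.
have := hx a aX; case: (ltgtP (dotp x a) 0) => // xa _.
- have := closure_le (cell_neg hx aX xa) cy; rewrite le_eqVlt (negbTE ya) /= => h.
  by rewrite ltNge (ltW h).
- have := closure_ge (cell_pos hx aX xa) cy; rewrite le_eqVlt eq_sym (negbTE ya) /=.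
  by move=> ->.
Qed.

Lemma sgn_neg (R : realType) (p q : R) : p != 0 -> q != 0 ->
  (0 < p) = (0 < q) -> (0 < - p) = (0 < - q).
Proof.
rewrite !oppr_gt0 => p0 q0.
case: (ltgtP p 0) p0 => // hp _; case: (ltgtP q 0) q0 => // hq _ //.
Qed.

Lemma sgn_flip (R : realType) (p q : R) : p != 0 -> q != 0 ->
  (0 < p) != (0 < q) -> (0 < p) = (0 < - q).
Proof.
rewrite !oppr_gt0 => p0 q0.
case: (ltgtP p 0) p0 => // hp _; case: (ltgtP q 0) q0 => // hq _ //.
Qed.

Lemma wall_simple (R : realType) n (X : seq 'rV[R]_n) b x C' S :
  root_system X -> b \in X -> hcompl X x ->
  connected_through (cell X x) C' (hyp b) -> is_simple_of X (cell X x) S ->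
  b \in S \/ - b \in S.
Proof.
move=> rs bX hx ct [[sub fr sp] pos].
have [y [cy _ yb gen]] := ct_generic rs bX ct.
have xS : forall s, s \in S -> 0 < dotp x s.
  by move=> s /pos [_ h]; apply: h; exact: cell_self.
have yS : forall s, s \in S -> 0 <= dotp y s.
  by move=> s /pos [_ h]; exact: closure_ge h cy.
have [g [gX xg yg gb]] : exists g, [/\ g \in X, 0 < dotp x g, dotp y g = 0 & g = b \/ g = - b].
  have := hx b bX; case: (ltgtP (dotp x b) 0) => // xb _.
    exists (- b); split; [exact: rs_neg | by rewrite dotpNr oppr_gt0 |
                          by rewrite dotpNr yb oppr0 | by right].
  by exists b; split => //; left.
have g0 := rs_nz rs gX.
have [c [e [cpos|cneg]]] := sp g gX; last first.
  have : dotp x g <= 0.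
    rewrite e dotp_sumr; apply: sumr_le0 => i _; rewrite dotpZr.
    by apply: mulr_le0_ge0 => //; apply: ltW; apply: xS; exact: mem_nth.
  by rewrite leNgt xg.
have E : dotp y g = \sum_(j < size S) c j * dotp y S`_j.
  by rewrite e dotp_sumr; apply: eq_bigr => j _; rewrite dotpZr.
rewrite yg in E.
have ys : forall i, c i * dotp y S`_i = 0.
  move=> i; apply: (psumr_eq0P _ (esym E)) => //.
  by move=> j _; apply: mulr_ge0 => //; apply: yS; exact: mem_nth.
case: (pselect (exists i, c i != 0)) => [[i ci]|nc]; last first.
  exfalso; move/negP: g0; apply; apply/eqP; rewrite e big1 // => i _.
  case: (eqVneq (c i) 0) => [->|ci]; first by rewrite scale0r.
  by exfalso; apply: nc; exists i.
have ySi : dotp y S`_i = 0 by move: (ys i) => /eqP; rewrite mulf_eq0 (negbTE ci) => /eqP.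
have SiX : S`_i \in X by apply: sub; exact: mem_nth.
have iS : S`_i \in S by exact: mem_nth.
case: (eqVneq S`_i b) => [eb|nb]; first by left; rewrite -eb.
case: (eqVneq S`_i (- b)) => [eb|nnb]; first by right; rewrite -eb.
by move: (gen _ SiX nb nnb); rewrite ySi eqxx.
Qed.

Lemma wall_adj (R : realType) n (X : seq 'rV[R]_n) b x C' :
  root_system X -> b \in X -> hcompl X x -> chamber X C' ->
  connected_through (cell X x) C' (hyp b) ->
  C' = cell X x \/ C' = reflC b (cell X x).
Proof.
move=> rs bX hx /chamber_cell [x' hx' ->] ct.
have b0 := rs_nz rs bX; have nbX := rs_neg rs bX.
have [y [cy cy' yb gen]] := ct_generic rs bX ct.
have gen2 : forall a, a \in X -> a != b -> a != - b -> (0 < dotp x' a) = (0 < dotp x a).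
  move=> a aX ab aNb; have ya := gen a aX ab aNb.
  by rewrite -(closure_cell_sign hx' aX cy' ya) (closure_cell_sign hx aX cy ya).
have xb := hx b bX; have x'b := hx' b bX.
case: (boolP ((0 < dotp x' b) == (0 < dotp x b))) => [/eqP same|diff].
- left; apply: cell_eq => a aX.
  case: (eqVneq a b) => [->//|ab]; case: (eqVneq a (- b)) => [->|aNb].
    by rewrite !dotpNr; apply: sgn_neg.
  exact: gen2.
- right; rewrite reflC_cell //; apply: cell_eq => a aX.
  rewrite refl_dotr //.
  case: (eqVneq a b) => [->|ab].
    by rewrite refl_self // dotpNr; apply: sgn_flip.
  case: (eqVneq a (- b)) => [->|aNb].
    rewrite reflN refl_self // opprK dotpNr; apply/esym; apply: sgn_flip => //.
    by rewrite eq_sym.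
  have a2X : refl b a \in X by exact: rs_refl.
  have a2b : refl b a != b.
    apply/eqP => e; move: aNb; rewrite -(refl_refl a b0) e refl_self // eqxx //.
  have a2Nb : refl b a != - b.
    apply/eqP => e; move: ab; rewrite -(refl_refl a b0) e reflN refl_self // opprK eqxx //.
  have ya2 := gen _ a2X a2b a2Nb.
  rewrite -(closure_cell_sign hx a2X cy ya2) -refl_dotr // refl_fix //.
  have ya : dotp y a != 0 by move: ya2; rewrite -refl_dotr // refl_fix.
  by rewrite (closure_cell_sign hx' aX cy' ya).
Qed.

Lemma nbhs_all (R : realType) n (A : seq 'rV[R]_n) (Q : 'rV[R]_n -> set R) :
  (forall a, a \in A -> nbhs (0 : R) (Q a)) ->
  nbhs (0 : R) [set e | forall a, a \in A -> Q a e].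
Proof.
elim: A => [|a A IH] h.
  by apply: filterE => e a; rewrite in_nil.
have h1 : nbhs (0 : R) (Q a) by apply: h; exact: mem_head.
have h2 : nbhs (0 : R) [set e | forall c, c \in A -> Q c e].
  by apply: IH => c cA; apply: h; rewrite inE cA orbT.
apply: (filterS2 _ _ h1 h2).
move=> e qa qA c; rewrite inE => /orP [/eqP -> //|]; exact: qA.
Qed.

Lemma line_cont (R : realType) n (z g : 'rV[R]_n) : continuous (fun e : R => z + e *: g).
Proof.
move=> t; apply: (@continuousD _ _ R (fun=> z) (fun t => t *: g)).
  exact: cst_continuous.
by apply: continuousZr_tmp; exact: cvg_id.
Qed.

Lemma refl_cont (R : realType) n (b : 'rV[R]_n) : continuous (refl b).
Proof.
move=> v.
have h1 : {for v, continuous (fun v : 'rV[R]_n => v)} by exact: cvg_id.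
have h4 : {for v, continuous (fun v => 2 * dotp v b)}.
  apply: cvgMl_tmp; [exact: nbhs_filter|exact: dotp_cont].
have h3 : {for v, continuous (fun v => 2 * dotp v b / dotp b b)}.
  apply: cvgMr_tmp; [exact: nbhs_filter|exact: h4].
have h2 : {for v, continuous (fun v => (2 * dotp v b / dotp b b) *: b)}.
  exact: continuousZr_tmp h3.
exact: (continuousB h1 h2).
Qed.

Lemma closure_reflC_fix (R : realType) n (b : 'rV[R]_n) C z : b != 0 ->
  closure C z -> refl b z = z -> closure (reflC b C) z.
Proof.
move=> b0 cz fz B nB.
have : nbhs z (refl b @^-1` B).
  have h := @refl_cont _ _ b z B; rewrite fz in h; exact: h nB.
move=> /cz [w [Cw Bw]]; exists (refl b w); split => //.
by rewrite /reflC /= refl_refl.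
Qed.

Lemma facet_closure (R : realType) n (X : seq 'rV[R]_n) x S g z :
  root_system X -> hcompl X x -> is_simple_of X (cell X x) S -> g \in S ->
  dotp z g = 0 -> (forall s, s \in S -> s != g -> 0 < dotp z s) ->
  closure (cell X x) z.
Proof.
move=> rs hx [[sub fr sp] pos] gS zg zS.
have xS : forall s, s \in S -> 0 < dotp x s.
  by move=> s /pos [_ h]; apply: h; exact: cell_self.
have gX := sub _ gS; have g0 := rs_nz rs gX; have xg := xS _ gS.
have claimA : forall a, a \in X -> 0 < dotp x a -> 0 < dotp z a \/ a = g.
  move=> a aX xa.
  have [c [e [cpos|cneg]]] := sp a aX; last first.
    have : dotp x a <= 0.
      rewrite e dotp_sumr; apply: sumr_le0 => i _; rewrite dotpZr.
      by apply: mulr_le0_ge0 => //; apply: ltW; apply: xS; exact: mem_nth.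
    by rewrite leNgt xa.
  have tz : forall i, 0 <= c i * dotp z S`_i.
    move=> i; apply: mulr_ge0 => //.
    case: (eqVneq S`_i g) => [->|ne]; first by rewrite zg.
    by apply: ltW; apply: zS => //; exact: mem_nth.
  have E : dotp z a = \sum_(i < size S) c i * dotp z S`_i.
    by rewrite e dotp_sumr; apply: eq_bigr => j _; rewrite dotpZr.
  case: (ltP 0 (dotp z a)) => [za|za]; first by left.
  have E0 : \sum_(i < size S) c i * dotp z S`_i = 0.
    apply/eqP; rewrite eq_le sumr_ge0 // andbT -E //.
  have ti : forall i, c i * dotp z S`_i = 0.
    by move=> i; apply: (psumr_eq0P _ E0).
  pose t := \sum_(i < size S) (if S`_i == g then c i else 0).
  have at_ : a = t *: g.
    rewrite e /t scaler_suml; apply: eq_bigr => i _.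
    case: (eqVneq S`_i g) => [->//|ne].
    have : c i = 0.
      move: (ti i) => /eqP; rewrite mulf_eq0 => /orP [/eqP //|].
      by rewrite gt_eqF // zS // mem_nth.
    by move=> ->; rewrite !scale0r.
  right; have tX : t *: g \in X by rewrite -at_.
  case: (rs_reduced rs gX tX) => ht; first by rewrite at_ ht scale1r.
  by move: xa; rewrite at_ ht scaleN1r dotpNr oppr_gt0 ltNge (ltW xg).
move=> B nB.
have nB' : nbhs (0 : R) ((fun e : R => z + e *: g) @^-1` B).
  have h := @line_cont _ _ z g 0 B; rewrite /= scale0r addr0 in h; exact: h nB.
have nQ : nbhs (0 : R) [set e | forall a, a \in X -> 0 < dotp z a -> 0 < dotp (z + e *: g) a].
  apply: nbhs_all => a aX.
  case: (ltP 0 (dotp z a)) => za; last by apply: filterE => e.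
  have nV : nbhs z [set v | 0 < dotp v a].
    by apply: open_nbhs_nbhs; split => //; exact: open_dotp_gt.
  have h := @line_cont _ _ z g 0 [set v | 0 < dotp v a].
  rewrite /= scale0r addr0 in h.
  have h2 : nbhs (0:R) [set e : R | 0 < dotp (z + e *: g) a] := h nV.
  by apply: (filterS _ h2) => e /= he _.
have /nbhs_ballP [r r0 hr] : nbhs (0 : R) (fun e => B (z + e *: g) /\
   forall a, a \in X -> 0 < dotp z a -> 0 < dotp (z + e *: g) a).
  by apply: (@filterS2 _ _ _ _ _ _ _ nB' nQ) => e h1 h2; split.
have inb : ball (0 : R) r (r / 2).
  rewrite -ball_normE /ball_ /= sub0r normrN gtr0_norm ?divr_gt0 //.
  by rewrite ltr_pdivrMr // ltr_pMr // ltr1n.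
have [Bw Pw] := hr _ inb.
set w := z + (r / 2) *: g in Bw Pw.
have wpos : forall a, a \in X -> 0 < dotp x a -> 0 < dotp w a.
  move=> a aX xa; case: (claimA a aX xa) => [za|->]; first exact: Pw.
  rewrite /w dotpDl zg add0r dotpZl mulr_gt0 ?dotpp_gt0 //.
  by rewrite divr_gt0.
exists w; split => //; split.
- move=> a aX; have := hx a aX; case: (ltgtP (dotp x a) 0) => // xa _.
    have : 0 < dotp w (- a) by apply: wpos; [exact: rs_neg | rewrite dotpNr oppr_gt0].
    by rewrite dotpNr oppr_gt0 => /lt_eqF ->.
  by move=> /=; rewrite gt_eqF // wpos.
- move=> a aX; have := hx a aX; case: (ltgtP (dotp x a) 0) => // xa _.
    have : 0 < dotp w (- a) by apply: wpos; [exact: rs_neg | rewrite dotpNr oppr_gt0].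
    by rewrite dotpNr oppr_gt0 => h; rewrite ltNge (ltW h).
  by rewrite wpos.
Qed.

Lemma open_allpos (R : realType) n (g : 'rV[R]_n) (T : seq 'rV[R]_n) :
  open [set z | forall s, s \in T -> s != g -> 0 < dotp z s].
Proof.
elim: T => [|s T IH].
  have -> : [set z : 'rV[R]_n | forall s, s \in [::] -> s != g -> 0 < dotp z s] = setT.
    by apply/seteqP; split => // z _ s; rewrite in_nil.
  exact: openT.
have -> : [set z | forall s0, s0 \in s :: T -> s0 != g -> 0 < dotp z s0] =
  [set z | s != g -> 0 < dotp z s] `&` [set z | forall s, s \in T -> s != g -> 0 < dotp z s].
  apply/seteqP; split => z /=.
    by move=> h; split => [|t tT]; apply: h; rewrite inE ?eqxx ?tT ?orbT.
  by move=> [h1 h2] t; rewrite inE => /orP [/eqP ->//|]; exact: h2.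
apply: openI => //.
case: (eqVneq s g) => [->|sg].
  by rewrite openE => z _; apply: filterE => w /=.
rewrite openE => z /= hz.
have := @open_dotp_gt _ _ s; rewrite openE => /(_ z (hz isT)) h.
by apply: (filterS _ h) => w hw _.
Qed.

Lemma simple_wall_ct (R : realType) n (X : seq 'rV[R]_n) x S g b :
  root_system X -> hcompl X x -> is_simple_of X (cell X x) S -> minS X x S ->
  g \in S -> b \in X -> (g = b \/ g = - b) ->
  connected_through (cell X x) (cell X x) (hyp b) /\
  connected_through (cell X x) (reflC b (cell X x)) (hyp b).
Proof.
move=> rs hx hS mS gS bX gb.
have [[sub _ _] pos] := hS.
have xS : forall s, s \in S -> 0 < dotp x s.
  by move=> s /pos [_ h]; apply: h; exact: cell_self.
have gX := sub _ gS; have g0 := rs_nz rs gX; have b0 := rs_nz rs bX.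
have hypg : hyp b = hyp g by case: gb => ->; rewrite ?hypN.
have reflg : refl b = refl g by case: gb => ->; apply/funext => v; rewrite ?reflNa.
pose y0 := x - (dotp x g / dotp g g) *: g.
pose U := [set z | forall s, s \in S -> s != g -> 0 < dotp z s].
have oU : open U by exact: open_allpos.
have gg := dotpp_gt0 g0.
have y0g : dotp y0 g = 0 by rewrite /y0 dotpBl dotpZl; field; exact: lt0r_neq0.
have Uy0 : U y0.
  move=> s sS sg; rewrite /y0 dotpBl dotpZl.
  have gs : dotp g s <= 0 by apply: (obtuse rs hx mS) => //; rewrite eq_sym.
  have k0 : 0 <= dotp x g / dotp g g by rewrite divr_ge0 // ltW // xS.
  have := xS _ sS; nra.
have key : U `&` hyp b `<=` closure (cell X x) `&` closure (reflC b (cell X x)) `&` hyp b.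
  move=> z [Uz hz]; have zg : dotp z g = 0 by move: hz; rewrite hypg.
  have cz : closure (cell X x) z by exact: (facet_closure rs hx hS gS zg Uz).
  split => //; split => //.
  by apply: closure_reflC_fix => //; rewrite reflg; exact: refl_fix.
have hy0 : hyp b y0 by rewrite hypg.
split; exists y0, U; split => //.
by move=> z /key [[c1 _] h]; split.
Qed.

Lemma ct_sym (R : realType) n (C D L : set 'rV[R]_n) :
  connected_through C D L -> connected_through D C L.
Proof.
move=> [x [U [oU Ux Lx sub]]]; exists x, U; split => // z /sub [[c1 c2] l].
by split.
Qed.

Lemma refl_pm (R : realType) n (b g : 'rV[R]_n) : b != 0 -> (g = b \/ g = - b) -> refl b g = - g.
Proof. by move=> b0 [->|->]; rewrite ?reflN refl_self. Qed.

Lemma step_lemma (R : realType) n (Phi Psi : seq 'rV[R]_n) C D D' b :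
  root_system Phi -> root_subsystem Phi Psi ->
  chamber Phi C -> chamber Psi D -> chamber Psi D' -> b \in Psi ->
  connected_through D D' (hyp b) -> lifts Phi Psi C D ->
  exists C', [/\ chamber Phi C', connected_through C C' (hyp b), lifts Phi Psi C' D' &
    forall C'', chamber Phi C'' -> connected_through C C'' (hyp b) ->
      lifts Phi Psi C'' D' -> C'' = C'].
Proof.
move=> rs rss chC chD chD' bPsi ct L.
have rsP := subsystem_rs rs rss; have [_ subP _] := rss.
have bPhi := subP _ bPsi; have b0 := rs_nz rs bPhi.
have [x hx eC] := chamber_cell chC; have [xd hxd eD] := chamber_cell chD.
subst C D.
have [SPsi [hSPsi _]] := simple_exists rsP hxd.
have [SPhi [hSPhi mSPhi]] := simple_exists rs hx.
have [g [gin gb]] : exists g, g \in SPsi /\ (g = b \/ g = - b).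
  case: (wall_simple rsP bPsi hxd ct hSPsi) => h; [exists b | exists (- b)]; split => //.
    by left.
  by right.
have gPhi : g \in SPhi by exact: (L _ _ hSPhi hSPsi g gin).
have [ctC ctR] := simple_wall_ct rs hx hSPhi mSPhi gPhi bPhi gb.
have xg : 0 < dotp x g by have [_ h] := hSPhi; apply: (proj2 (h g gPhi)); exact: cell_self.
have rg := refl_pm b0 gb.
have nA : ~ lifts Phi Psi (reflC b (cell Phi x)) (cell Psi xd).
  move=> L2; rewrite reflC_cell // in L2.
  have hx2 := hcompl_refl rs bPhi hx.
  have [S2 [hS2 _]] := simple_exists rs hx2.
  have gS2 := L2 _ _ hS2 hSPsi g gin.
  have [_ h] := (proj2 hS2) g gS2.
  have := h _ (cell_self hx2); rewrite refl_dotr // rg dotpNr oppr_gt0.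
  by rewrite ltNge (ltW xg).
have nB : ~ lifts Phi Psi (cell Phi x) (reflC b (cell Psi xd)).
  move=> L2.
  have hS' : is_simple_of Psi (reflC b (reflC b (cell Psi xd))) SPsi by rewrite reflC_invol.
  have hm := simple_map rsP bPsi hS'.
  have := L2 _ _ hSPhi hm (refl b g); rewrite map_f // => /(_ isT).
  rewrite rg => ngS.
  have [_ h] := (proj2 hSPhi) _ ngS.
  by have := h _ (cell_self hx); rewrite dotpNr oppr_gt0 ltNge (ltW xg).
case: (wall_adj rsP bPsi hxd chD' ct) => ->.
- exists (cell Phi x); split => //.
  move=> C'' chC'' ct'' L''; case: (wall_adj rs bPhi hx chC'' ct'') => e //.
  by rewrite e in L''.
- exists (reflC b (cell Phi x)); split => //.
  + exact: chamber_reflC.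
  + exact: lifts_refl.
  + move=> C'' chC'' ct'' L''; case: (wall_adj rs bPhi hx chC'' ct'') => e //.
    by rewrite e in L''.
Qed.

Definition specC (R : realType) n (Phi Psi : seq 'rV[R]_n) (C D' L C' : set 'rV[R]_n) :=
  [/\ chamber Phi C', connected_through C C' L & lifts Phi Psi C' D'].

Definition stepf (R : realType) n (Phi Psi : seq 'rV[R]_n) (C D' L : set 'rV[R]_n) : set 'rV[R]_n :=
  match pselect (exists C', specC Phi Psi C D' L C') with
  | left h => projT1 (cid h)
  | right _ => C
  end.

Lemma stepf_spec (R : realType) n (Phi Psi : seq 'rV[R]_n) (C D' L : set 'rV[R]_n) :
  (exists C', specC Phi Psi C D' L C') -> specC Phi Psi C D' L (stepf Phi Psi C D' L).
Proof.
move=> h; rewrite /stepf; case: pselect => [h'|//].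
exact: (projT2 (cid h')).
Qed.

Lemma step_spec (R : realType) n (Phi Psi : seq 'rV[R]_n) C D D' L :
  root_system Phi -> root_subsystem Phi Psi ->
  chamber Phi C -> chamber Psi D -> chamber Psi D' -> (exists2 b, b \in Psi & L = hyp b) ->
  connected_through D D' L -> lifts Phi Psi C D ->
  specC Phi Psi C D' L (stepf Phi Psi C D' L) /\
  forall C'', specC Phi Psi C D' L C'' -> C'' = stepf Phi Psi C D' L.
Proof.
move=> rs rss chC chD chD' [b bPsi ->] ct LL.
have [C' [h1 h2 h3 h4]] := step_lemma rs rss chC chD chD' bPsi ct LL.
have sp : specC Phi Psi C D' (hyp b) (stepf Phi Psi C D' (hyp b)).
  by apply: stepf_spec; exists C'.
split => // C'' [k1 k2 k3].
have [j1 j2 j3] := sp.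
by rewrite (h4 _ k1 k2 k3) (h4 _ j1 j2 j3).
Qed.

Fixpoint fwd (R : realType) n (Phi Psi : seq 'rV[R]_n) (Ds W : nat -> set 'rV[R]_n)
  (i : nat) (C : set 'rV[R]_n) (k : nat) : set 'rV[R]_n :=
  match k with
  | 0 => C
  | k'.+1 => stepf Phi Psi (fwd Phi Psi Ds W i C k') (Ds (i + k'.+1)%N) (W (i + k'.+1)%N)
  end.

Fixpoint bwd (R : realType) n (Phi Psi : seq 'rV[R]_n) (Ds W : nat -> set 'rV[R]_n)
  (i : nat) (C : set 'rV[R]_n) (k : nat) : set 'rV[R]_n :=
  match k with
  | 0 => C
  | k'.+1 => stepf Phi Psi (bwd Phi Psi Ds W i C k') (Ds (i - k'.+1)%N) (W (i - k')%N)
  end.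

Lemma gal_step (R : realType) n (X : seq 'rV[R]_n) m Ds W j :
  gallery X m Ds W -> (1 <= j <= m)%N ->
  (exists2 a, a \in X & W j = hyp a) /\ connected_through (Ds j.-1) (Ds j) (W j).
Proof. by move=> [_ h] hj; apply: h. Qed.

Lemma gal_ch (R : realType) n (X : seq 'rV[R]_n) m Ds W j :
  gallery X m Ds W -> (j <= m)%N -> chamber X (Ds j).
Proof. by move=> [h _] hj; apply: h. Qed.

Lemma fwd_step (R : realType) n (Phi Psi : seq 'rV[R]_n) m Ds W i C :
  root_system Phi -> root_subsystem Phi Psi -> gallery Psi m Ds W ->
  forall k, (i + k.+1 <= m)%N -> chamber Phi (fwd Phi Psi Ds W i C k) ->
    lifts Phi Psi (fwd Phi Psi Ds W i C k) (Ds (i + k)%N) ->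
    specC Phi Psi (fwd Phi Psi Ds W i C k) (Ds (i + k.+1)%N) (W (i + k.+1)%N) (fwd Phi Psi Ds W i C k.+1) /\
    forall C'', specC Phi Psi (fwd Phi Psi Ds W i C k) (Ds (i + k.+1)%N) (W (i + k.+1)%N) C'' ->
      C'' = fwd Phi Psi Ds W i C k.+1.
Proof.
move=> rs rss gal k hk1 ch lf.
have hk : (i + k <= m)%N by rewrite (leq_trans _ hk1) // leq_add2l.
have hj : (1 <= i + k.+1 <= m)%N by rewrite hk1 addnS.
have [hb ct] := gal_step gal hj.
rewrite addnS /= in ct; rewrite -addnS in ct.
exact: (step_spec rs rss ch (gal_ch gal hk) (gal_ch gal hk1) hb ct lf).
Qed.

Lemma fwd_ok (R : realType) n (Phi Psi : seq 'rV[R]_n) m Ds W i C :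
  root_system Phi -> root_subsystem Phi Psi -> gallery Psi m Ds W ->
  chamber Phi C -> lifts Phi Psi C (Ds i) ->
  forall k, (i + k <= m)%N ->
  chamber Phi (fwd Phi Psi Ds W i C k) /\ lifts Phi Psi (fwd Phi Psi Ds W i C k) (Ds (i + k)%N).
Proof.
move=> rs rss gal chC LC.
elim=> [|k IH] hk; first by rewrite addn0.
have hk' : (i + k <= m)%N by rewrite (leq_trans _ hk) // leq_add2l.
have [ch lf] := IH hk'.
by have [[s1 s2 s3] _] := @fwd_step _ _ Phi Psi m Ds W i C rs rss gal k hk ch lf.
Qed.

Lemma bwd_step (R : realType) n (Phi Psi : seq 'rV[R]_n) m Ds W i C :
  root_system Phi -> root_subsystem Phi Psi -> gallery Psi m Ds W -> (i <= m)%N ->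
  forall k, (k.+1 <= i)%N -> chamber Phi (bwd Phi Psi Ds W i C k) ->
    lifts Phi Psi (bwd Phi Psi Ds W i C k) (Ds (i - k)%N) ->
    specC Phi Psi (bwd Phi Psi Ds W i C k) (Ds (i - k.+1)%N) (W (i - k)%N) (bwd Phi Psi Ds W i C k.+1) /\
    forall C'', specC Phi Psi (bwd Phi Psi Ds W i C k) (Ds (i - k.+1)%N) (W (i - k)%N) C'' ->
      C'' = bwd Phi Psi Ds W i C k.+1.
Proof.
move=> rs rss gal him k hk ch lf.
have hj : (1 <= i - k <= m)%N.
  by rewrite subn_gt0 hk (leq_trans (leq_subr _ _) him).
have [hb ct] := gal_step gal hj.
rewrite -subnS in ct.
have h1 : (i - k <= m)%N by rewrite (leq_trans (leq_subr _ _) him).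
have h2 : (i - k.+1 <= m)%N by rewrite (leq_trans (leq_subr _ _) him).
exact: (step_spec rs rss ch (gal_ch gal h1) (gal_ch gal h2) hb (ct_sym ct) lf).
Qed.

Lemma bwd_ok (R : realType) n (Phi Psi : seq 'rV[R]_n) m Ds W i C :
  root_system Phi -> root_subsystem Phi Psi -> gallery Psi m Ds W -> (i <= m)%N ->
  chamber Phi C -> lifts Phi Psi C (Ds i) ->
  forall k, (k <= i)%N ->
  chamber Phi (bwd Phi Psi Ds W i C k) /\ lifts Phi Psi (bwd Phi Psi Ds W i C k) (Ds (i - k)%N).
Proof.
move=> rs rss gal him chC LC.
elim=> [|k IH] hk; first by rewrite subn0.
have hk' : (k <= i)%N by rewrite ltnW.
have [ch lf] := IH hk'.
by have [[s1 s2 s3] _] := @bwd_step _ _ Phi Psi m Ds W i C rs rss gal him k hk ch lf.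
Qed.

Unset Implicit Arguments.

Theorem theorem2 (R : realType) (n : nat) (Phi Psi : seq 'rV[R]_n)
  (m : nat) (Ds : nat -> set 'rV[R]_n) (W : nat -> set 'rV[R]_n)
  (i : nat) (C : set 'rV[R]_n) :
  root_system Phi -> root_subsystem Phi Psi ->
  gallery Psi m Ds W -> (i <= m)%N ->
  chamber Phi C -> lifts Phi Psi C (Ds i) ->
  exists Cs : nat -> set 'rV[R]_n,
    [/\ gallery Phi m Cs W, lifts_gallery Phi Psi m Cs Ds, Cs i = C &
        forall Cs' : nat -> set 'rV[R]_n,
          gallery Phi m Cs' W -> lifts_gallery Phi Psi m Cs' Ds -> Cs' i = C ->
          forall j, (j <= m)%N -> Cs' j = Cs j].
Proof.
move=> rs rss gal him chC LC.
pose F := fwd Phi Psi Ds W i C; pose B := bwd Phi Psi Ds W i C.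
pose Cs := fun j => if (i <= j)%N then F (j - i)%N else B (i - j)%N.
have CsF : forall k, Cs (i + k)%N = F k by move=> k; rewrite /Cs leq_addr addKn.
have CsB : forall k, (k <= i)%N -> Cs (i - k)%N = B k.
  case=> [|k] hk; first by rewrite /Cs subn0 leqnn subnn.
  have i0 : (0 < i)%N by exact: leq_trans hk.
  by rewrite /Cs leqNgt ltn_subrL i0 /= subKn.
have okF := fwd_ok rs rss gal chC LC.
have okB := bwd_ok rs rss gal him chC LC.
have ok : forall j, (j <= m)%N -> chamber Phi (Cs j) /\ lifts Phi Psi (Cs j) (Ds j).
  move=> j jm; case: (leqP i j) => ij.
    by rewrite -(subnKC ij) CsF; apply: okF; rewrite subnKC.
  rewrite -(subKn (ltnW ij)) CsB ?leq_subr //; apply: okB; exact: leq_subr.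
exists Cs; split.
- split; first by move=> j /ok [].
  move=> j hj; have [[a aPsi ea] _] := gal_step gal hj; split.
    by exists a => //; have [_ subP _] := rss; exact: subP.
  have [j1 jm] := andP hj.
  case: (ltnP i j) => ij.
    have [k ek] : exists k, j = (i + k.+1)%N.
      by exists (j - i).-1; rewrite prednK ?subn_gt0 // subnKC // ltnW.
    subst j.
    have -> : (i + k.+1).-1 = (i + k)%N by rewrite addnS.
    rewrite CsF CsF.
    have hk : (i + k <= m)%N by rewrite (leq_trans _ jm) // leq_add2l.
    have [ch lf] := okF k hk.
    by have [[_ s2 _] _] := @fwd_step _ _ Phi Psi m Ds W i C rs rss gal k jm ch lf.
  have [k [hk ek]] : exists k, (k.+1 <= i)%N /\ j = (i - k)%N.
    exists (subn i j); split; last by rewrite subKn.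
    by rewrite ltn_subrL j1 (leq_trans j1 ij).
  subst j; rewrite -subnS CsB // CsB; last exact: ltnW.
  have [ch lf] := okB k (ltnW hk).
  have [[_ s2 _] _] := @bwd_step _ _ Phi Psi m Ds W i C rs rss gal him k hk ch lf.
  exact: (ct_sym s2).
- by move=> j /ok [].
- by rewrite /Cs leqnn subnn.
move=> Cs' gal' lf' ei.
have UF : forall k, (i + k <= m)%N -> Cs' (i + k)%N = F k.
  elim=> [|k IH] hk; first by rewrite addn0.
  have hk' : (i + k <= m)%N by rewrite (leq_trans _ hk) // leq_add2l.
  have [ch lf] := okF k hk'.
  have [_ uq] := @fwd_step _ _ Phi Psi m Ds W i C rs rss gal k hk ch lf.
  apply: uq; split; first exact: (gal_ch gal' hk).
    have hj : (1 <= i + k.+1 <= m)%N by rewrite hk addnS.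
    have [_ ct] := gal_step gal' hj.
    by move: ct; rewrite addnS /= -addnS (IH hk').
  exact: lf'.
have UB : forall k, (k <= i)%N -> Cs' (i - k)%N = B k.
  elim=> [|k IH] hk; first by rewrite subn0.
  have hk' : (k <= i)%N by rewrite ltnW.
  have [ch lf] := okB k hk'.
  have [_ uq] := @bwd_step _ _ Phi Psi m Ds W i C rs rss gal him k hk ch lf.
  have h1 : (i - k.+1 <= m)%N by rewrite (leq_trans (leq_subr _ _) him).
  apply: uq; split; first exact: (gal_ch gal' h1).
    have hj : (1 <= i - k <= m)%N by rewrite subn_gt0 hk (leq_trans (leq_subr _ _) him).
    have [_ ct] := gal_step gal' hj.
    by move: ct; rewrite -subnS (IH hk'); exact: ct_sym.
  exact: lf'.
move=> j jm; case: (leqP i j) => ij.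
  by rewrite -(subnKC ij) UF ?CsF // subnKC.
by rewrite -(subKn (ltnW ij)) UB ?leq_subr // CsB ?leq_subr.
Qed.
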